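(* Let $u$ and $v$ be robots on the same ring $r$ of an $m$-partial SCS. Then $u$ prevents $v$ from starving if and only if $r$ has a tie whose length equals the length of a simple path (along $r$) between $u$ and $v$.
   Context: Let $T=\{C_1,\dots,C_n\}$ be pairwise disjoint unit circles in the plane (trajectories) and $\epsilon<0.5$ a communication range. The graph of potential links $G_\epsilon(T)$ has the circle centers as nodes and an edge $\{i,j\}$ whenever the centers of $C_i,C_j$ are at distance at most $2+\epsilon$; it is assumed connected. Points of a circle are identified with angles (modulo $2\pi$), and a robot traverses a circle in one time unit. A schedule is a pair $(f,g)$, $f:T\to[0,2\pi)$, $g:T\to\{-1,1\}$ ($1$ = counterclockwise); the robot on $C_i$ is at angle $f(C_i)+2\pi g(C_i)t$ at time $t$. A communication graph $G=(V,E)$ is a connected spanning subgraph of $G_\epsilon(T)$. The link position $\phi_{ij}$ is the point of $C_i$ closest to $C_j$. A schedule is $G$-synchronized if for every $\{i,j\}\in E$ the robot on $C_i$ is at $\phi_{ij}$ exactly when the robot on $C_j$ is at $\phi_{ji}$. An SCS with communication graph $G$ consists of $n$ robots, one per circle, moving under a $G$-synchronized schedule with $g(C_i)=-g(C_j)$ for all $\{i,j\}\in E$. Shifting protocol: when a robot on $C_i$ reaches $\phi_{ij}$ and there is no robot at $\phi_{ji}$, it moves to $C_j$ and thereafter follows the schedule of $C_j$. An $m$-partial SCS is obtained by removing $n-m$ robots, the remaining $m$ applying the shifting protocol. A surviving robot starves if every time it arrives at a link position the corresponding neighbor is absent. A ring is the closed path traversed by a starving robot (following the assigned direction on each circle and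 always shifting to the neighboring circle at link positions). The length of a path along a ring is the total length of circle arcs it traverses, with multiplicity, ignoring transitions between circles; a path in a ring follows its travel direction and may contain full tours; it is simple if it contains no full tour. The crossing point of neighboring circles $C_i,C_j$ is the midpoint of the segment joining $\phi_{ij}$ and $\phi_{ji}$; a ring crosses itself at a crossing point if it traverses it in both directions ($C_i\to C_j$ and $C_j\to C_i$). A tie of a ring is a closed sub-path of the ring starting and ending at a crossing point where the ring crosses itself, without passing through that point in between. A robot $u'$ in ring $r'$ prevents a robot $u$ in ring $r$ from starving if there is a crossing point $c$ between $r$ and $r'$ (possibly $r=r'$) and two paths of equal length, one from the position of $u$ to $c$ in $r$ and one from the position of $u'$ to $c$ in $r'$. *)

(* Defs.v *)
From Stdlib Require Import Reals Lra Lia List ZArith Relations.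
Import ListNotations.
Open Scope R_scope.

Definition point : Type := (R * R)%type.

Definition dist (p q : point) : R :=
  sqrt ((fst p - fst q) ^ 2 + (snd p - snd q) ^ 2).

Definition midpoint (p q : point) : point :=
  ((fst p + fst q) / 2, (snd p + snd q) / 2).

Definition is_direction_angle (th : R) (p q : point) : Prop :=
  0 <= th < 2 * PI /\
  fst q - fst p = dist p q * cos th /\
  snd q - snd p = dist p q * sin th.

Definition on_circle (c : point) (th : R) : point :=
  (fst c + cos th, snd c + sin th).

Definition congr_mod (x y L : R) : Prop := exists z : Z, x - y = IZR z * L.

(** length of the arc of a unit circle travelled from angle [a] to angle [b]
    in direction [d] (1 = counterclockwise, -1 = clockwise); it lies in
    (0, 2pi], a full tour when a = b (mod 2pi). *)
Definition sweep (d a b : R) : R :=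
  let y := d * (b - a) in y + 2 * PI * IZR (up (- y / (2 * PI))).

(** Circles are indexed by 0..n-1, [ctr i] is the centre of C_i, [E] is the
    edge relation of the communication graph G, [g] the direction part of the
    schedule, [phi i j] the angle of the link position phi_ij (point of C_i
    closest to C_j). *)
Definition scs_setting (n : nat) (ctr : nat -> point) (eps : R)
    (E : nat -> nat -> Prop) (g : nat -> R) (phi : nat -> nat -> R) : Prop :=
  eps < 1 / 2 /\
  (forall i j, (i < n)%nat -> (j < n)%nat -> i <> j -> 2 < dist (ctr i) (ctr j)) /\
  (forall i j, E i j ->
     (i < n)%nat /\ (j < n)%nat /\ i <> j /\ dist (ctr i) (ctr j) <= 2 + eps) /\
  (forall i j, E i j -> E j i) /\
  (forall i j, (i < n)%nat -> (j < n)%nat -> clos_refl_trans nat E i j) /\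
  (forall i, (i < n)%nat -> g i = 1 \/ g i = -1) /\
  (forall i j, E i j -> g i = - g j) /\
  (forall i j, E i j -> is_direction_angle (phi i j) (ctr i) (ctr j)).

Definition link_point (ctr : nat -> point) (phi : nat -> nat -> R) (i j : nat) : point :=
  on_circle (ctr i) (phi i j).

Definition crossing_point (ctr : nat -> point) (phi : nat -> nat -> R) (i j : nat) : point :=
  midpoint (link_point ctr phi i j) (link_point ctr phi j i).

(** * Rings
    A ring is described by the cyclic list [cs = [i_0; ...; i_{k-1}]] of the
    circles it visits.  Arc [t] lies on circle [cyc cs t]; it is entered from
    circle [prv cs t] at link position phi_(i_t, i_(t-1)) (transition [t],
    from [prv cs t] to [cyc cs t], through their crossing point) and left at
    link position phi_(i_t, i_(t+1)), travelling in direction [g i_t].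
    Points of the ring are parametrised by arc length modulo the ring length:
    arc [t] occupies parameters [arc_start t, arc_start (t+1)] and transition
    [t] happens at parameter [arc_start t]. *)
Definition cyc (cs : list nat) (t : nat) : nat := nth (t mod length cs) cs 0%nat.
Definition prv (cs : list nat) (t : nat) : nat := cyc cs (t + length cs - 1).

Definition arc_len (g : nat -> R) (phi : nat -> nat -> R) (cs : list nat) (t : nat) : R :=
  sweep (g (cyc cs t)) (phi (cyc cs t) (prv cs t)) (phi (cyc cs t) (cyc cs (S t))).

Definition arc_start (g : nat -> R) (phi : nat -> nat -> R) (cs : list nat) (t : nat) : R :=
  fold_right Rplus 0 (map (arc_len g phi cs) (seq 0 t)).

Definition ring_length (g : nat -> R) (phi : nat -> nat -> R) (cs : list nat) : R :=
  arc_start g phi cs (length cs).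

(** [cs] is a ring: the closed path traversed by a starving robot, i.e. it
    follows the direction of each circle, shifts to the neighbouring circle at
    every link position it meets (no link position of the current circle lies
    strictly inside an arc), and is listed exactly once (no directed
    transition repeats: the list is one period of the motion). *)
Definition is_ring (n : nat) (E : nat -> nat -> Prop) (g : nat -> R)
    (phi : nat -> nat -> R) (cs : list nat) : Prop :=
  (1 <= length cs)%nat /\
  (forall t, (t < length cs)%nat -> (cyc cs t < n)%nat /\ E (prv cs t) (cyc cs t)) /\
  (forall t j, (t < length cs)%nat -> E (cyc cs t) j ->
     arc_len g phi cs t
       <= sweep (g (cyc cs t)) (phi (cyc cs t) (prv cs t)) (phi (cyc cs t) j)) /\
  NoDup (map (fun t => (prv cs t, cyc cs t)) (seq 0 (length cs))).

Definition trans_at (ctr : nat -> point) (phi : nat -> nat -> R) (cs : list nat)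
    (c : point) (t : nat) : Prop :=
  (t < length cs)%nat /\ crossing_point ctr phi (prv cs t) (cyc cs t) = c.

Definition crosses_itself (ctr : nat -> point) (phi : nat -> nat -> R)
    (cs : list nat) (c : point) : Prop :=
  exists t1 t2, trans_at ctr phi cs c t1 /\ trans_at ctr phi cs c t2 /\
    prv cs t1 = cyc cs t2 /\ cyc cs t1 = prv cs t2.

(** a tie of length [l] at crossing point [c]: a closed sub-path of the ring
    from [c] back to [c] that does not pass through [c] in between *)
Definition is_tie (ctr : nat -> point) (g : nat -> R) (phi : nat -> nat -> R)
    (cs : list nat) (c : point) (l : R) : Prop :=
  crosses_itself ctr phi cs c /\
  exists t1 t2,
    trans_at ctr phi cs c t1 /\ trans_at ctr phi cs c t2 /\ 0 < l /\
    congr_mod (arc_start g phi cs t1 + l) (arc_start g phi cs t2) (ring_length g phi cs) /\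
    (forall t x, trans_at ctr phi cs c t -> 0 < x < l ->
       ~ congr_mod (arc_start g phi cs t1 + x) (arc_start g phi cs t) (ring_length g phi cs)).

(** a simple path (no full tour) of length [l] along ring of length [L]
    from parameter [p] to parameter [q] *)
Definition simple_path (L p q l : R) : Prop :=
  0 <= l < L /\ congr_mod (p + l) q L.

(** The robot at parameter [p'] of ring [cs'] prevents the robot at parameter
    [p] of ring [cs] from starving: there is a crossing point [c] traversed by
    the two rings in opposite directions and two paths of equal length [l],
    one from [p] to [c] along [cs] and one from [p'] to [c] along [cs']. *)
Definition prevents (ctr : nat -> point) (g : nat -> R) (phi : nat -> nat -> R)
    (cs' : list nat) (p' : R) (cs : list nat) (p : R) : Prop :=
  exists c t t' l,
    trans_at ctr phi cs c t /\ trans_at ctr phi cs' c t' /\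
    prv cs t = cyc cs' t' /\ cyc cs t = prv cs' t' /\
    0 <= l /\
    congr_mod (p + l) (arc_start g phi cs t) (ring_length g phi cs) /\
    congr_mod (p' + l) (arc_start g phi cs' t') (ring_length g phi cs').

(* Main.v *)
Require Import Defs.
From Stdlib Require Import Reals Lra Lia List ZArith.
Import ListNotations.
Require Import Defs.
Open Scope R_scope.

Lemma sweep_pos d a b : 0 < sweep d a b.
Proof.
  unfold sweep. set (y := d * (b - a)).
  destruct (archimed (- y / (2 * PI))) as [H1 H2].
  pose proof PI_RGT_0 as HP.
  assert (H3 : 2 * PI * (- y / (2 * PI)) < 2 * PI * IZR (up (- y / (2 * PI)))).
  { apply Rmult_lt_compat_l; lra. }
  replace (2 * PI * (- y / (2 * PI))) with (- y) in H3 by (field; lra).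
  lra.
Qed.

Lemma fr_shift (l : list R) (a : R) : fold_right Rplus a l = fold_right Rplus 0 l + a.
Proof. induction l; simpl; [lra | rewrite IHl; lra]. Qed.

Lemma arc_start_S g phi cs t :
  arc_start g phi cs (S t) = arc_start g phi cs t + arc_len g phi cs t.
Proof.
  unfold arc_start. rewrite seq_S, map_app, fold_right_app. simpl.
  rewrite fr_shift. lra.
Qed.

Lemma arc_start_mono g phi cs t k :
  arc_start g phi cs t < arc_start g phi cs (t + S k).
Proof.
  induction k.
  - rewrite Nat.add_succ_r, arc_start_S, Nat.add_0_r.
    pose proof (sweep_pos (g (cyc cs t)) (phi (cyc cs t) (prv cs t)) (phi (cyc cs t) (cyc cs (S t)))).
    unfold arc_len. lra.
  - rewrite Nat.add_succ_r, arc_start_S.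
    pose proof (sweep_pos (g (cyc cs (t + S k))) (phi (cyc cs (t + S k)) (prv cs (t + S k)))
                  (phi (cyc cs (t + S k)) (cyc cs (S (t + S k))))).
    unfold arc_len. lra.
Qed.

Lemma arc_start_lt g phi cs t s : (t < s)%nat -> arc_start g phi cs t < arc_start g phi cs s.
Proof.
  intro H. replace s with (t + S (s - t - 1))%nat by lia. apply arc_start_mono.
Qed.

Lemma arc_start_nonneg g phi cs t : 0 <= arc_start g phi cs t.
Proof.
  destruct t.
  - unfold arc_start. simpl. lra.
  - pose proof (arc_start_lt g phi cs 0 (S t) ltac:(lia)).
    unfold arc_start at 1 in H. simpl in H. lra.
Qed.

Lemma nodup_map_inj {A B : Type} (f : A -> B) (l : list A) x y :
  NoDup (map f l) -> In x l -> In y l -> f x = f y -> x = y.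
Proof.
  induction l as [|a l IH]; simpl; intros Hn Hx Hy Hf; [contradiction|].
  inversion Hn; subst.
  destruct Hx as [Hx|Hx]; destruct Hy as [Hy|Hy]; subst; auto.
  - exfalso. apply H1. rewrite Hf. apply in_map; auto.
  - exfalso. apply H1. rewrite <- Hf. apply in_map; auto.
Qed.

Lemma cm_unique x y L : 0 <= x < L -> 0 <= y < L -> congr_mod x y L -> x = y.
Proof.
  intros Hx Hy [z Hz].
  assert (Hz1 : -1 < IZR z < 1).
  { split.
    - destruct (Rle_or_lt (IZR z) (-1)) as [H|H]; auto.
      assert (IZR z * L <= -1 * L) by (apply Rmult_le_compat_r; lra). lra.
    - destruct (Rle_or_lt 1 (IZR z)) as [H|H]; auto.
      assert (1 * L <= IZR z * L) by (apply Rmult_le_compat_r; lra). lra. }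
  destruct Hz1 as [Ha Hb]. apply lt_IZR in Ha. apply lt_IZR in Hb.
  assert (z = 0%Z) by lia. subst. simpl in Hz. lra.
Qed.

Lemma cm_rep x L : 0 < L -> exists y, 0 <= y < L /\ congr_mod x y L.
Proof.
  intro HL. destruct (archimed (x / L)) as [H1 H2].
  exists (x - (IZR (up (x / L)) - 1) * L). split.
  - assert (Ha : (IZR (up (x / L)) - 1) * L <= x / L * L) by (apply Rmult_le_compat_r; lra).
    assert (Hb : x / L * L < IZR (up (x / L)) * L) by (apply Rmult_lt_compat_r; lra).
    replace (x / L * L) with x in * by (field; lra). lra.
  - exists (up (x / L) - 1)%Z. rewrite minus_IZR. simpl. ring.
Qed.

Lemma cm_pos_ge l L : 0 < L -> 0 < l -> congr_mod l 0 L -> L <= l.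
Proof.
  intros HL Hl [z Hz].
  assert (0 < IZR z).
  { destruct (Rle_or_lt (IZR z) 0) as [H|H]; auto.
    assert (IZR z * L <= 0 * L) by (apply Rmult_le_compat_r; lra). lra. }
  apply lt_IZR in H. assert (1 <= IZR z) by (apply IZR_le; lia).
  assert (1 * L <= IZR z * L) by (apply Rmult_le_compat_r; lra). lra.
Qed.

Lemma dist_sym p q : dist p q = dist q p.
Proof. unfold dist. f_equal. ring. Qed.

Lemma dist_sq p q : dist p q * dist p q = (fst p - fst q) ^ 2 + (snd p - snd q) ^ 2.
Proof. unfold dist. apply sqrt_sqrt. apply Rplus_le_le_0_compat; apply pow2_ge_0. Qed.

Lemma dist_nonneg p q : 0 <= dist p q.
Proof. unfold dist. apply sqrt_pos. Qed.

Lemma para (P I J K : point) :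
  fst I + fst J = fst P + fst K -> snd I + snd J = snd P + snd K ->
  dist I J <= 5/2 -> dist P K <= 5/2 -> 2 < dist P I -> 2 < dist P J -> False.
Proof.
  intros H1 H2 H3 H4 H5 H6.
  pose proof (dist_sq I J). pose proof (dist_sq P K). pose proof (dist_sq P I).
  pose proof (dist_sq P J).
  pose proof (dist_nonneg I J). pose proof (dist_nonneg P K).
  assert (dist I J * dist I J <= 25/4) by nra.
  assert (dist P K * dist P K <= 25/4) by nra.
  assert (4 < dist P I * dist P I) by nra.
  assert (4 < dist P J * dist P J) by nra.
  destruct P as [px py]; destruct I as [ix iy]; destruct J as [jx jy]; destruct K as [kx ky].
  simpl in *.
  assert (kx = ix + jx - px) by lra. assert (ky = iy + jy - py) by lra. subst kx ky.
  assert ((px - ix) ^ 2 + (py - iy) ^ 2 + ((px - jx) ^ 2 + (py - jy) ^ 2) =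
          ((ix - jx) ^ 2 + (iy - jy) ^ 2 + ((px - (ix + jx - px)) ^ 2 + (py - (iy + jy - py)) ^ 2)) / 2)
    by (field; lra).
  lra.
Qed.

Section Geo.
Variables (n : nat) (ctr : nat -> point) (eps : R)
    (E : nat -> nat -> Prop) (g : nat -> R) (phi : nat -> nat -> R).
Hypothesis HS : scs_setting n ctr eps E g phi.

Lemma cp_mid i j : E i j -> crossing_point ctr phi i j = midpoint (ctr i) (ctr j).
Proof.
  intro Hij.
  destruct HS as [Heps [Hdisj [HE [Hsym [Hconn [Hg [Hgo Hphi]]]]]]].
  destruct (HE i j Hij) as [Hi [Hj [Hne Hd]]].
  pose proof (Hdisj i j Hi Hj Hne) as Hd2.
  destruct (Hphi i j Hij) as [_ [A1 A2]].
  destruct (Hphi j i (Hsym i j Hij)) as [_ [B1 B2]].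
  rewrite (dist_sym (ctr j) (ctr i)) in B1, B2.
  set (d := dist (ctr i) (ctr j)) in *.
  assert (C1 : d * (cos (phi i j) + cos (phi j i)) = 0) by lra.
  assert (C2 : d * (sin (phi i j) + sin (phi j i)) = 0) by lra.
  apply Rmult_integral in C1. apply Rmult_integral in C2.
  destruct C1 as [C1|C1]; [lra|]. destruct C2 as [C2|C2]; [lra|].
  unfold crossing_point, link_point, midpoint, on_circle. simpl.
  f_equal; lra.
Qed.

Lemma mid_inj i j a b : E i j -> E a b ->
  midpoint (ctr i) (ctr j) = midpoint (ctr a) (ctr b) ->
  (a = i /\ b = j) \/ (a = j /\ b = i).
Proof.
  intros Hij Hab Hm.
  destruct HS as [Heps [Hdisj [HE [Hsym [Hconn [Hg [Hgo Hphi]]]]]]].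
  destruct (HE i j Hij) as [Hi [Hj [Hne Hd]]].
  destruct (HE a b Hab) as [Ha [Hb [Hne' Hd']]].
  assert (X : (fst (ctr i) + fst (ctr j)) / 2 = (fst (ctr a) + fst (ctr b)) / 2)
    by (apply (f_equal fst) in Hm; exact Hm).
  assert (Y : (snd (ctr i) + snd (ctr j)) / 2 = (snd (ctr a) + snd (ctr b)) / 2)
    by (apply (f_equal snd) in Hm; exact Hm).
  assert (Ka : a = i \/ a = j).
  { destruct (Nat.eq_dec a i); auto. destruct (Nat.eq_dec a j); auto. exfalso.
    apply (para (ctr a) (ctr i) (ctr j) (ctr b)); try lra.
    - apply Hdisj; auto.
    - apply Hdisj; auto. }
  assert (Kb : b = i \/ b = j).
  { destruct (Nat.eq_dec b i); auto. destruct (Nat.eq_dec b j); auto. exfalso.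
    apply (para (ctr b) (ctr i) (ctr j) (ctr a)); try lra.
    - rewrite dist_sym; lra.
    - apply Hdisj; auto.
    - apply Hdisj; auto. }
  destruct Ka, Kb; subst; auto; contradiction.
Qed.
End Geo.

Theorem lemma8 (n : nat) (ctr : nat -> point) (eps : R)
    (E : nat -> nat -> Prop) (g : nat -> R) (phi : nat -> nat -> R)
    (r : list nat) (pu pv : R) :
  scs_setting n ctr eps E g phi ->
  is_ring n E g phi r ->
  0 <= pu < ring_length g phi r ->
  0 <= pv < ring_length g phi r ->
  (prevents ctr g phi r pu r pv <->
   exists c l, is_tie ctr g phi r c l /\
     (simple_path (ring_length g phi r) pu pv l \/
      simple_path (ring_length g phi r) pv pu l)).
Proof.
  intros HS HR Hu Hv.
  destruct HR as [Hlen [Htr [_ Hnd]]].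
  set (L := ring_length g phi r) in *.
  set (A := arc_start g phi r).
  assert (HL : L = A (length r)) by reflexivity.
  assert (HA : forall t, (t < length r)%nat -> 0 <= A t < L).
  { intros t Ht. split. apply arc_start_nonneg. rewrite HL. apply arc_start_lt; auto. }
  assert (HAi : forall t s, (t < length r)%nat -> (s < length r)%nat -> t <> s -> A t <> A s).
  { intros t s Ht Hs Hts. destruct (Nat.lt_gt_cases t s) as [[H|H] _]; auto.
    - pose proof (arc_start_lt g phi r t s H). unfold A. lra.
    - pose proof (arc_start_lt g phi r s t H). unfold A. lra. }
  assert (HLp : 0 < L) by (pose proof (HA 0%nat ltac:(lia)); lra).
  assert (Hirr : forall t, (t < length r)%nat -> prv r t <> cyc r t).
  { intros t Ht. destruct (Htr t Ht) as [_ He].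
    destruct HS as [_ [_ [HE _]]]. destruct (HE _ _ He) as [_ [_ [? _]]]; auto. }
  assert (Huniq : forall c t1 t2 s, trans_at ctr phi r c t1 -> trans_at ctr phi r c t2 ->
            prv r t1 = cyc r t2 -> cyc r t1 = prv r t2 -> trans_at ctr phi r c s ->
            s = t1 \/ s = t2).
  { intros c t1 t2 s [H1 C1] [H2 C2] E1 E2 [Hs Cs].
    destruct (Htr t1 H1) as [_ Ee1]. destruct (Htr s Hs) as [_ Ees].
    rewrite <- Cs in C1. rewrite !(cp_mid n ctr eps E g phi HS) in C1 by auto.
    destruct (mid_inj n ctr eps E g phi HS _ _ _ _ Ee1 Ees C1) as [[P1 P2]|[P1 P2]].
    - left. apply (nodup_map_inj _ _ _ _ Hnd); try (apply in_seq; lia).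
      rewrite P1, P2; auto.
    - right. apply (nodup_map_inj _ _ _ _ Hnd); try (apply in_seq; lia).
      simpl. rewrite P1, P2, E1, E2; auto. }
  subst A.
  split.
  - intros [c [t [t' [l [Ht [Ht' [E1 [E2 [Hl [C1 C2]]]]]]]]]].
    assert (Htt : t <> t').
    { intro; subst. destruct Ht as [Ht _]. apply (Hirr t'); auto. }
    destruct (cm_rep (arc_start g phi r t' - arc_start g phi r t) L HLp) as [d0 [Hd0 Cd]].
    pose proof (HA t (proj1 Ht)). pose proof (HA t' (proj1 Ht')).
    assert (Hd0p : d0 <> 0).
    { intro; subst. apply (HAi t' t (proj1 Ht') (proj1 Ht)); auto.
      apply (cm_unique _ _ L); auto. destruct Cd as [z Hz]. exists z. (unfold L in *; lra). }
    exists c, d0. split.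
    + split. { exists t, t'. auto. }
      exists t, t'. split; auto. split; auto. split; [(unfold L in *; lra)|]. split.
      * destruct Cd as [z Hz]. exists (- z)%Z. rewrite opp_IZR. (unfold L in *; lra).
      * intros s x Hs Hx Cx. destruct (Huniq c t t' s Ht Ht' E1 E2 Hs); subst s.
        -- assert (x = 0). { apply (cm_unique _ _ L); try (unfold L in *; lra). destruct Cx as [z Hz]. exists z. (unfold L in *; lra). }
           (unfold L in *; lra).
        -- assert (x = d0). { apply (cm_unique _ _ L); try (unfold L in *; lra).
             destruct Cx as [z Hz]. destruct Cd as [z' Hz']. exists (z + z')%Z.
             rewrite plus_IZR. (unfold L in *; lra). }
           (unfold L in *; lra).
    + right. split; [(unfold L in *; lra)|].
      destruct Cd as [z Hz]. destruct C1 as [z1 H1]. destruct C2 as [z2 H2].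
      exists (z1 - z2 - z)%Z. rewrite !minus_IZR. (unfold L in *; lra).
  - intros [c [l [[[s1 [s2 [Hs1 [Hs2 [E1 E2]]]]] [t1 [t2 [Ht1 [Ht2 [Hl [Cl Hfr]]]]]]] Hsp]]].
    assert (Hss : s1 <> s2).
    { intro; subst. destruct Hs1 as [Hs1 _]. apply (Hirr s2); auto. }
    assert (Ht12 : t1 <> t2).
    { intro; subst t2.
      assert (Hge : L <= l).
      { apply cm_pos_ge; auto. destruct Cl as [z Hz]. exists z. (unfold L in *; lra). }
      assert (Hx : exists s', trans_at ctr phi r c s' /\ s' <> t1).
      { destruct (Huniq c s1 s2 t1 Hs1 Hs2 E1 E2 Ht1); subst; eauto. }
      destruct Hx as [s' [Hs' Hne]].
      pose proof (HA t1 (proj1 Ht1)). pose proof (HA s' (proj1 Hs')).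
      destruct (cm_rep (arc_start g phi r s' - arc_start g phi r t1) L HLp) as [x [Hx Cx]].
      assert (x <> 0).
      { intro; subst. apply (HAi s' t1 (proj1 Hs') (proj1 Ht1)); auto.
        apply (cm_unique _ _ L); auto. destruct Cx as [z Hz]. exists z. (unfold L in *; lra). }
      apply (Hfr s' x Hs'); [(unfold L in *; lra)|].
      destruct Cx as [z Hz]. exists (- z)%Z. rewrite opp_IZR. (unfold L in *; lra). }
    assert (Hop : prv r t1 = cyc r t2 /\ cyc r t1 = prv r t2).
    { destruct (Huniq c s1 s2 t1 Hs1 Hs2 E1 E2 Ht1);
      destruct (Huniq c s1 s2 t2 Hs1 Hs2 E1 E2 Ht2); subst; auto; try contradiction.
    }
    destruct Hop as [O1 O2].
    destruct Hsp as [[Hl0 Cp]|[Hl0 Cp]].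
    + destruct (cm_rep (arc_start g phi r t2 - pv) L HLp) as [l' [Hl' Cl']].
      exists c, t2, t1, l'. split; auto. split; auto. split; auto. split; auto.
      split; [(unfold L in *; lra)|]. split.
      * destruct Cl' as [z Hz]. exists (- z)%Z. rewrite opp_IZR. (unfold L in *; lra).
      * destruct Cl' as [z Hz]. destruct Cp as [z1 H1]. destruct Cl as [z2 H2].
        exists (z1 - z2 - z)%Z. rewrite !minus_IZR. (unfold L in *; lra).
    + destruct (cm_rep (arc_start g phi r t1 - pv) L HLp) as [l' [Hl' Cl']].
      exists c, t1, t2, l'. split; auto. split; auto. split; auto. split; auto.
      split; [(unfold L in *; lra)|]. split.
      * destruct Cl' as [z Hz]. exists (- z)%Z. rewrite opp_IZR. (unfold L in *; lra).
      * destruct Cl' as [z Hz]. destruct Cp as [z1 H1]. destruct Cl as [z2 H2].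
        exists (z2 - z1 - z)%Z. rewrite !minus_IZR. (unfold L in *; lra).
Qed.
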